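(* Let $\Gamma=(V,E)$ be a finite vertex-transitive graph admitting an extended irregular dominating set $S$. Then for every vertex $u\in V$ there exists a unique vertex $v\in S$ covering $u$.
   Context: Let $\Gamma=(V,E)$ be a finite simple undirected graph with graph distance $d$. A vertex $v$ carrying a non-negative integer label $\ell$ dominates (covers) exactly the vertices $u$ with $d(u,v)=\ell$; a vertex labeled $0$ dominates only itself. An extended irregular dominating set is a set $S\subseteq V$ together with a labeling $\lambda:S\to\mathbb{Z}_{\ge 0}$ with distinct labels on distinct vertices, such that every vertex of $V$ is dominated by at least one vertex of $S$; it is assumed that some vertex of $S$ has label $0$. *)

(* Defs.v *)
From mathcomp Require Import all_boot all_fingroup.
Set Implicit Arguments. Unset Strict Implicit. Unset Printing Implicit Defensive.

Definition simple_graph (T : finType) (e : rel T) : Prop :=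
  symmetric e /\ irreflexive e.

Fixpoint walk (T : finType) (e : rel T) (n : nat) (u v : T) : bool :=
  match n with
  | 0 => u == v
  | n'.+1 => [exists w, e u w && walk e n' w v]
  end.

(* Graph distance: d(u,v) = l, i.e. a walk of length l exists and no shorter
   one does (vertices in different components are at no finite distance). *)
Definition at_dist (T : finType) (e : rel T) (u v : T) (l : nat) : bool :=
  walk e l u v && [forall k : 'I_l, ~~ walk e k u v].

Definition graph_aut (T : finType) (e : rel T) (f : {perm T}) : Prop :=
  forall x y, e (f x) (f y) = e x y.

Definition vertex_transitive (T : finType) (e : rel T) : Prop :=
  forall x y : T, exists f : {perm T}, graph_aut e f /\ f x = y.

Definition covers (T : finType) (e : rel T) (lam : T -> nat) (v u : T) : bool :=
  at_dist e v u (lam v).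

Definition ext_irregular_dominating (T : finType) (e : rel T)
    (S : {set T}) (lam : T -> nat) : Prop :=
  {in S &, injective lam} /\
  (forall u : T, exists2 v, v \in S & covers e lam v u) /\
  (exists2 v, v \in S & lam v = 0).

(* Main.v *)
Require Import Defs.
From mathcomp Require Import all_boot all_fingroup.
Set Implicit Arguments. Unset Strict Implicit.

Section Aux.
Variables (T : finType) (e : rel T).

Lemma walk_aut (f : {perm T}) : graph_aut e f ->
  forall n x y, walk e n (f x) (f y) = walk e n x y.
Proof.
move=> ha; elim=> [|n IH] x y /=; first by rewrite (inj_eq perm_inj).
apply/existsP/existsP => [[w /andP[h1 h2]]|[w /andP[h1 h2]]].
- exists ((f^-1)%g w); rewrite -ha -IH permKV; exact/andP.
- exists (f w); rewrite ha IH; exact/andP.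
Qed.

Lemma at_dist_aut (f : {perm T}) : graph_aut e f ->
  forall x y l, at_dist e (f x) (f y) l = at_dist e x y l.
Proof.
move=> ha x y l; rewrite /at_dist walk_aut //; congr (_ && _).
by apply: eq_forallb => k; rewrite walk_aut.
Qed.

Definition sph x l := [set u | at_dist e x u l].

Lemma sph_card (f : {perm T}) : graph_aut e f ->
  forall x l, #|sph (f x) l| = #|sph x l|.
Proof.
move=> ha x l; rewrite -[RHS](card_imset _ (@perm_inj _ f)); apply: eq_card => u.
have -> : u = f ((f^-1)%g u) by rewrite permKV.
by rewrite (mem_imset _ _ (@perm_inj _ f)) !inE (at_dist_aut ha).
Qed.

Lemma at_dist_uniq x u l l' : at_dist e x u l -> at_dist e x u l' -> l = l'.
Proof.
move=> /andP[w1 /forallP f1] /andP[w2 /forallP f2].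
case: (ltngtP l l') => // h.
- by move: (f2 (Ordinal h)); rewrite w1.
- by move: (f1 (Ordinal h)); rewrite w2.
Qed.

Lemma card_bigcup_le (I : finType) (P : pred I) (F : I -> {set T}) :
  #|\bigcup_(i | P i) F i| <= \sum_(i | P i) #|F i|.
Proof.
elim/big_rec2: _ => [|i A n _ h]; first by rewrite cards0.
apply: leq_trans (leq_card_setU _ _) _.
by rewrite leq_add2l.
Qed.

End Aux.

Theorem theorem2p5 (T : finType) (e : rel T) (S : {set T}) (lam : T -> nat) :
  simple_graph e -> vertex_transitive e -> ext_irregular_dominating e S lam ->
  forall u : T, exists! v : T, v \in S /\ covers e lam v u.
Proof.
move=> _ vt [inj [cov _]] u; rewrite /covers; rewrite /covers in cov.
pose C v := sph e v (lam v).
have hsum : \sum_(v in S) #|C v| <= #|T|.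
  pose F i := if i \in S then sph e u (lam i) else set0.
  have -> : \sum_(v in S) #|C v| = \sum_i #|F i|.
    rewrite big_mkcond; apply: eq_bigr => i _; rewrite /F.
    case: ifP => _; last by rewrite cards0.
    rewrite /C.
    have [f [ha fx]] := vt u i; by rewrite -fx sph_card.
  have dj : forall i j, i != j -> [disjoint F i & F j].
    move=> a b nij; apply/pred0P => x /=; rewrite /F.
    case: ifP => iS; last by rewrite inE.
    case: ifP => jS; last by rewrite andbC inE.
    apply/negP => /andP[]; rewrite !inE => h1 h2.
    by move: nij; rewrite (inj a b iS jS (at_dist_uniq h1 h2)) eqxx.
  have := partition_disjoint_bigcup addn (fun _ => 1) dj.
  rewrite sum1_card => h.
  rewrite (eq_bigr (fun i => \sum_(x in F i) 1)) => [|i _]; last by rewrite sum1_card.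
  rewrite -h; exact: max_card.
have [v vS cv] := cov u.
exists v; split; first by split.
move=> w [wS cw]; apply/eqP; apply/negPn/negP => nvw; move: hsum.
pose B := \bigcup_(x in S :\ v) C x.
have hT : #|T| = #|C v :|: B|.
  rewrite -cardsT; apply: eq_card => x; rewrite !inE.
  have [y yS cy] := cov x.
  case: (eqVneq y v) => [<-|nyv]; first by rewrite cy.
  apply/esym/orP; right; apply/bigcupP; exists y; first by rewrite !inE nyv.
  by rewrite inE.
have hI : 0 < #|C v :&: B|.
  apply/card_gt0P; exists u; rewrite !inE cv /=.
  apply/bigcupP; exists w; first by rewrite !inE eq_sym nvw.
  by rewrite inE.
have := cardsUI (C v) B; rewrite -hT.
rewrite (bigD1 v vS) /= => hUI.
have hB := card_bigcup_le (fun x => x \in S :\ v) C.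
have -> : \sum_(i in S | i != v) #|C i| = \sum_(i in S :\ v) #|C i|.
  by apply: eq_bigl => i; rewrite !inE andbC.
move=> hle.
have : #|T| + #|C v :&: B| <= #|T| .
  rewrite hUI; apply: leq_trans hle; rewrite leq_add2l; exact: hB.
by rewrite -{2}[#|T|]addn0 leq_add2l leqNgt hI.
Qed.
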